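(* Let $M,K$ be positive integers and let $R_1,\dots,R_n$ be positive integers with $R_i<2^K$. Let $s_i\in\{0,1,\dots,R_i-1\}$ for $i=1,\dots,n$. Starting from state $c_0=2^M$ and empty bit-stream $\mathtt{bs}_0$, encode $s_1,\dots,s_n$ in order with the UBCS encoder, where $s_i$ is encoded using $U(0,R_i)$, and let $c_i,\mathtt{bs}_i$ denote the state and bit-stream after encoding $s_i$. Then, starting from $(c_n,\mathtt{bs}_n)$, decode sequentially with the UBCS decoder using $U(0,R_n),U(0,R_{n-1}),\dots,U(0,R_1)$, obtaining symbols $s'_n,s'_{n-1},\dots,s'_1$, and let $c'_i,\mathtt{bs}'_i$ denote the state and bit-stream after decoding $s'_{i+1}$. Then: (P1) $s'_{i+1}=s_{i+1}$, $c'_i=c_i$ and $\mathtt{bs}'_i=\mathtt{bs}_i$ for all $i=0,\dots,n-1$. (P2) Letting $l_i=\lceil\log c_i\rceil+\mathtt{len}(\mathtt{bs}_i)$, where $\mathtt{len}$ is the total number of bits in the bit-stream, $$l_n-l_0<\frac{1}{1-1/(\ln 2\cdot 2^M\cdot K)}\Big[\sum_{i=1}^n\log R_i+1+(\ln 2\cdot 2^M)^{-1}\Big].$$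
   Context: All logarithms $\log$ are base 2. The Uniform Base Conversion System (UBCS) has an integer state $c$ and a bit-stream $\mathtt{bs}$, which is a stack of $K$-bit chunks. ENCODE a symbol $s\in\{0,\dots,R-1\}$ using $U(0,R)$ (with $R<2^K$): set $c\gets c\cdot R+s$; if $c\ge 2^{M+K}$, push the $K$-bit value $c\bmod 2^K$ onto the end of $\mathtt{bs}$ and set $c\gets\lfloor c/2^K\rfloor$; return $(c,\mathtt{bs})$. DECODE using $U(0,R)$ (with $R<2^K$): if $c<2^M\cdot R$, pop the last $K$-bit value $r$ from $\mathtt{bs}$ and set $c\gets 2^K\cdot c+r$; then set $s\gets c\bmod R$ and $c\gets\lfloor c/R\rfloor$; return $(s,c,\mathtt{bs})$. *)

(* Defs.v *)
From Stdlib Require Import Reals Lra Lia List Arith.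
Import ListNotations.
Open Scope R_scope.

Definition log2R (x : R) : R := ln x / ln 2.

(* ceiling: Int_part is the floor, so ceil x = - floor (- x) *)
Definition ceilR (x : R) : Z := (- Int_part (- x))%Z.

(* UBCS state: integer c and bit-stream bs, a stack of K-bit chunks
   (list of naturals < 2^K; the end of the list is the top). *)
Definition ubcs_state : Type := (nat * list nat)%type.

Definition ubcs_encode (M K R s : nat) (st : ubcs_state) : ubcs_state :=
  let c := (fst st * R + s)%nat in
  if (2 ^ (M + K) <=? c)%nat
  then (c / 2 ^ K, snd st ++ [c mod 2 ^ K])%nat
  else (c, snd st).

(* DECODE with U(0,R): returns (symbol, new state).  Popping from an empty
   stream (which never happens in the theorem) yields r = 0. *)
Definition ubcs_decode (M K R : nat) (st : ubcs_state) : nat * ubcs_state :=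
  let '(c0, bs0) := st in
  let '(c, bs) :=
    if (c0 <? 2 ^ M * R)%nat
    then ((2 ^ K * c0 + last bs0 0)%nat, removelast bs0)
    else (c0, bs0) in
  ((c mod R)%nat, ((c / R)%nat, bs)).

Fixpoint enc_states (M K : nat) (Rs ss : nat -> nat) (i : nat) : ubcs_state :=
  match i with
  | O => (2 ^ M, [])%nat
  | S j => ubcs_encode M K (Rs (S j)) (ss (S j)) (enc_states M K Rs ss j)
  end.

(* After k decoding steps starting from (c_n, bs_n), using
   U(0,R_n), ..., U(0,R_{n-k+1}): returns (s'_{n-k+1}, (c'_{n-k}, bs'_{n-k}))
   (the symbol component is meaningless for k = 0). *)
Fixpoint dec_states (M K : nat) (Rs ss : nat -> nat) (n k : nat)
  : nat * ubcs_state :=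
  match k with
  | O => (0%nat, enc_states M K Rs ss n)
  | S k' => ubcs_decode M K (Rs (n - k')%nat) (snd (dec_states M K Rs ss n k'))
  end.

Definition ubcs_len (K : nat) (st : ubcs_state) : R :=
  IZR (ceilR (log2R (INR (fst st)))) + INR (K * length (snd st)).

(* Main.v *)
Require Import Defs.
From Stdlib Require Import Reals List Arith Lia Lra.
Import ListNotations.
Open Scope R_scope.

Lemma pow_MK M K : (2 ^ (M + K) = 2 ^ M * 2 ^ K)%nat.
Proof. apply Nat.pow_add_r. Qed.

Lemma enc_step_bound M K R s c bs :
  (0 < R < 2 ^ K)%nat -> (s < R)%nat -> (2 ^ M <= c < 2 ^ (M + K))%nat ->
  (2 ^ M <= fst (ubcs_encode M K R s (c, bs)) < 2 ^ (M + K))%nat.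
Proof.
  intros HR Hs Hc. unfold ubcs_encode; simpl.
  rewrite pow_MK in *.
  assert (HP : (0 < 2 ^ M)%nat) by (apply Nat.neq_0_lt_0, Nat.pow_nonzero; lia).
  assert (HQ : (0 < 2 ^ K)%nat) by (apply Nat.neq_0_lt_0, Nat.pow_nonzero; lia).
  set (P := (2 ^ M)%nat) in *. set (Q := (2 ^ K)%nat) in *.
  destruct (P * Q <=? c * R + s)%nat eqn:E; simpl.
  - apply Nat.leb_le in E. split.
    + apply Nat.div_le_lower_bound; lia.
    + apply Nat.Div0.div_lt_upper_bound. nia.
  - apply Nat.leb_gt in E. nia.
Qed.

Lemma dec_enc M K R s c bs :
  (0 < R < 2 ^ K)%nat -> (s < R)%nat -> (2 ^ M <= c < 2 ^ (M + K))%nat ->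
  ubcs_decode M K R (ubcs_encode M K R s (c, bs)) = (s, (c, bs)).
Proof.
  intros HR Hs Hc. unfold ubcs_encode; simpl.
  rewrite pow_MK in *.
  assert (HP : (0 < 2 ^ M)%nat) by (apply Nat.neq_0_lt_0, Nat.pow_nonzero; lia).
  assert (HQ : (0 < 2 ^ K)%nat) by (apply Nat.neq_0_lt_0, Nat.pow_nonzero; lia).
  set (P := (2 ^ M)%nat) in *. set (Q := (2 ^ K)%nat) in *.
  assert (Hd : c = ((c * R + s) / R)%nat) by (apply (Nat.div_unique _ _ _ s); lia).
  assert (Hm : s = ((c * R + s) mod R)%nat) by (apply (Nat.mod_unique _ _ c); lia).
  destruct (P * Q <=? c * R + s)%nat eqn:E; simpl.
  - apply Nat.leb_le in E.
    set (x := (c * R + s)%nat) in *.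
    assert (Hlt : (x / Q < P * R)%nat).
    { apply Nat.Div0.div_lt_upper_bound. nia. }
    apply Nat.ltb_lt in Hlt. change (2 ^ M)%nat with P. change (2 ^ K)%nat with Q. rewrite Hlt.
    rewrite last_last, removelast_last.
    rewrite <- (Nat.div_mod_eq x Q). rewrite <- Hd, <- Hm. reflexivity.
  - apply Nat.leb_gt in E.
    assert (Hlt : (P * R <= c * R + s)%nat) by nia.
    apply Nat.ltb_ge in Hlt. change (2 ^ M)%nat with P. rewrite Hlt. rewrite <- Hd, <- Hm. reflexivity.
Qed.

Lemma enc_bound M K (Rs ss : nat -> nat) n
  (hK : (0 < K)%nat)
  (hR : forall i, (1 <= i <= n)%nat -> (0 < Rs i /\ Rs i < 2 ^ K)%nat)
  (hs : forall i, (1 <= i <= n)%nat -> (ss i < Rs i)%nat) :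
  forall i, (i <= n)%nat ->
  (2 ^ M <= fst (enc_states M K Rs ss i) < 2 ^ (M + K))%nat.
Proof.
  induction i; intros Hi.
  - simpl fst. split; [lia|]. apply Nat.pow_lt_mono_r; lia.
  - simpl enc_states. destruct (enc_states M K Rs ss i) as [c bs] eqn:E.
    apply enc_step_bound; [apply hR; lia | apply hs; lia |].
    specialize (IHi ltac:(lia)). exact IHi.
Qed.

Lemma dec_correct M K (Rs ss : nat -> nat) n
  (hK : (0 < K)%nat)
  (hR : forall i, (1 <= i <= n)%nat -> (0 < Rs i /\ Rs i < 2 ^ K)%nat)
  (hs : forall i, (1 <= i <= n)%nat -> (ss i < Rs i)%nat) :
  forall k, (k <= n)%nat ->
    snd (dec_states M K Rs ss n k) = enc_states M K Rs ss (n - k) /\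
    ((1 <= k)%nat -> fst (dec_states M K Rs ss n k) = ss (n - k + 1)%nat).
Proof.
  induction k; intros Hk.
  - simpl. rewrite Nat.sub_0_r. split; [reflexivity | lia].
  - simpl dec_states. destruct (IHk ltac:(lia)) as [H1 _]. rewrite H1.
    replace (n - k)%nat with (S (n - S k)) by lia.
    simpl enc_states.
    pose proof (enc_bound M K Rs ss n hK hR hs (n - S k) ltac:(lia)) as Hb.
    destruct (enc_states M K Rs ss (n - S k)) as [c bs] eqn:E.
    rewrite dec_enc; [| apply hR; lia | apply hs; lia | exact Hb].
    simpl. split; [reflexivity|]. intros _. f_equal. lia.
Qed.

Lemma ln_le' x y : 0 < x -> x <= y -> ln x <= ln y.
Proof.
  intros Hx Hxy. destruct (Rle_lt_or_eq_dec _ _ Hxy) as [H|H].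
  - left. apply ln_increasing; auto.
  - subst; lra.
Qed.

Lemma ln_le_sub1 z : 0 < z -> ln z <= z - 1.
Proof.
  intros Hz. destruct (Req_dec z 1) as [->|Hne].
  - rewrite ln_1. lra.
  - pose proof (exp_ineq1 (z - 1) ltac:(lra)) as H.
    rewrite <- (ln_exp (z - 1)). apply ln_le'; lra.
Qed.

Lemma ln_growth y a : 0 < y -> y <= a -> ln a <= ln y + (a - y) / y.
Proof.
  intros Hy Hya.
  assert (Ha : 0 < a) by lra.
  replace a with (y * (a / y)) at 1 by (field; lra).
  assert (0 < a / y) by (apply Rdiv_lt_0_compat; lra).
  rewrite ln_mult; auto.
  pose proof (ln_le_sub1 (a / y) H).
  replace ((a - y) / y) with (a / y - 1) by (field; lra). lra.
Qed.

Lemma ln2_pos : 0 < ln 2.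
Proof. pose proof ln_lt_2. lra. Qed.

Lemma log2R_pow M : log2R (INR (2 ^ M)) = INR M.
Proof.
  unfold log2R. rewrite pow_INR. replace (INR 2) with 2 by (simpl; lra). rewrite ln_pow by lra.
  pose proof ln2_pos. field. lra.
Qed.

Lemma ceil_bounds x : x <= IZR (ceilR x) < x + 1.
Proof.
  unfold ceilR. rewrite opp_IZR. pose proof (base_Int_part (- x)). lra.
Qed.

Lemma ln_step_push (P Q c cr R : R) : 1 <= P -> 1 <= Q -> 0 <= c -> 0 <= cr -> 0 < R ->
  Q * (cr + 1) + 1 <= (c + 1) * R + Q -> P * Q < (c + 1) * R ->
  ln (Q * (cr + 1)) <= ln (c + 1) + ln R + / P.
Proof.
  intros HP HQ Hc Hcr HR H1 H2.
  set (y := (c + 1) * R) in *.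
  assert (Hy : 0 < y) by nra.
  eapply Rle_trans. { apply (ln_le' _ (y + (Q - 1))); nra. }
  eapply Rle_trans. { apply (ln_growth y); lra. }
  unfold y at 1. rewrite ln_mult by lra.
  assert ((y + (Q - 1) - y) / y <= / P); [|lra].
  replace ((y + (Q - 1) - y) / y) with ((Q - 1) * / y) by (field; lra).
  assert (Hiy : y * / y = 1) by (field; lra).
  assert (HiP : P * / P = 1) by (field; lra).
  assert (0 < / y) by (apply Rinv_0_lt_compat; lra).
  assert (0 < / P) by (apply Rinv_0_lt_compat; lra).
  nra.
Qed.

Lemma INR_pow2 k : INR (2 ^ k) = 2 ^ k.
Proof. rewrite pow_INR. replace (INR 2) with 2 by (simpl; lra). reflexivity. Qed.

Lemma step_real M K R s c bs : (0 < K)%nat ->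
  (0 < R < 2 ^ K)%nat -> (s < R)%nat -> (2 ^ M <= c < 2 ^ (M + K))%nat ->
  log2R (INR (fst (ubcs_encode M K R s (c, bs))) + 1)
    + INR K * INR (length (snd (ubcs_encode M K R s (c, bs)))) <=
  log2R (INR c + 1) + INR K * INR (length bs) + log2R (INR R)
    + / (ln 2 * 2 ^ M) * (INR (length (snd (ubcs_encode M K R s (c, bs)))) - INR (length bs)).
Proof.
  intros hK HR Hs Hc. unfold ubcs_encode; simpl.
  rewrite Nat.pow_add_r in *.
  assert (HP : (1 <= 2 ^ M)%nat) by (apply Nat.neq_0_lt_0, Nat.pow_nonzero; lia).
  assert (HQ : (1 <= 2 ^ K)%nat) by (apply Nat.neq_0_lt_0, Nat.pow_nonzero; lia).
  pose proof ln2_pos as HL.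
  assert (HPr : 1 <= 2 ^ M) by (rewrite <- INR_pow2; apply (le_INR 1); lia).
  assert (HQr : 1 <= 2 ^ K) by (rewrite <- INR_pow2; apply (le_INR 1); lia).
  assert (HRr : 0 < INR R) by (apply (lt_INR 0); lia).
  assert (Hcr : 0 <= INR c) by apply pos_INR.
  unfold log2R.
  destruct (2 ^ M * 2 ^ K <=? c * R + s)%nat eqn:E; simpl.
  - apply Nat.leb_le in E.
    set (x := (c * R + s)%nat) in *.
    assert (N1 : (2 ^ K * (x / 2 ^ K + 1) + 1 <= (c + 1) * R + 2 ^ K)%nat).
    { pose proof (Nat.div_mod_eq x (2 ^ K)). pose proof (Nat.mod_upper_bound x (2 ^ K) ltac:(lia)).
      unfold x in *. nia. }
    assert (N2 : (2 ^ M * 2 ^ K < (c + 1) * R)%nat) by (unfold x in *; nia).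
    apply le_INR in N1. apply lt_INR in N2.
    repeat rewrite ?plus_INR, ?mult_INR, ?INR_pow2 in N1. repeat rewrite ?plus_INR, ?mult_INR, ?INR_pow2 in N2.
    simpl INR in N1, N2.
    assert (Hc' : 0 <= INR (x / 2 ^ K)) by apply pos_INR.
    pose proof (ln_step_push (2 ^ M) (2 ^ K) (INR c) (INR (x / 2 ^ K)) (INR R)
      HPr HQr Hcr Hc' HRr N1 N2) as H.
    rewrite ln_mult in H by lra. rewrite ln_pow in H by lra.
    rewrite length_app. simpl length. rewrite plus_INR. simpl (INR 1).
    set (L := ln 2) in *. set (A := ln (INR (x / 2 ^ K) + 1)) in *.
    set (B := ln (INR c + 1)) in *. set (C := ln (INR R)) in *.
    set (P := 2 ^ M) in *.
    assert (HiL : L * / L = 1) by (field; lra).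
    assert (0 < / L) by (apply Rinv_0_lt_compat; lra).
    rewrite Rinv_mult. unfold Rdiv.
    assert (H2 := Rmult_le_compat_r (/ L) _ _ (Rlt_le _ _ H0) H).
    rewrite !Rmult_plus_distr_r in H2. replace (INR K * L * / L) with (INR K) in H2 by (field; lra).
    replace (/ L * / P * (INR (length bs) + 1 - INR (length bs))) with (/ P * / L) by ring. lra.
  - apply Nat.leb_gt in E.
    assert (N1 : (c * R + s + 1 <= (c + 1) * R)%nat) by nia.
    apply le_INR in N1. repeat rewrite ?plus_INR, ?mult_INR in N1. simpl INR in N1.
    assert (H : ln (INR (c * R + s) + 1) <= ln (INR c + 1) + ln (INR R)).
    { rewrite <- ln_mult by lra. apply ln_le'.
      - pose proof (pos_INR (c * R + s)). lra.
      - rewrite plus_INR, mult_INR. lra. }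
    unfold Rdiv.
    assert (0 < / ln 2) by (apply Rinv_0_lt_compat; lra).
    assert (H2 := Rmult_le_compat_r (/ ln 2) _ _ (Rlt_le _ _ H0) H).
    nra.
Qed.

Fixpoint sumR (f : nat -> R) (n : nat) : R :=
  match n with O => 0 | S k => sumR f k + f (S k) end.

Lemma fold_plus_init (l : list R) a : fold_right Rplus a l = fold_right Rplus 0 l + a.
Proof. induction l; simpl; [lra | rewrite IHl; lra]. Qed.

Lemma fold_sum f n : fold_right Rplus 0 (map f (seq 1 n)) = sumR f n.
Proof.
  induction n; [reflexivity|].
  rewrite seq_S, map_app, fold_right_app. simpl.
  rewrite fold_plus_init, IHn. replace (1 + n)%nat with (S n) by lia. lra.
Qed.

Lemma log2R_le x y : 0 < x -> x <= y -> log2R x <= log2R y.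
Proof.
  intros. unfold log2R, Rdiv. apply Rmult_le_compat_r.
  - left. apply Rinv_0_lt_compat, ln2_pos.
  - apply ln_le'; auto.
Qed.

Definition Phi M K Rs ss i :=
  log2R (INR (fst (enc_states M K Rs ss i)) + 1)
  + INR K * INR (length (snd (enc_states M K Rs ss i))).

Lemma phi_sum M K (Rs ss : nat -> nat) n
  (hK : (0 < K)%nat)
  (hR : forall i, (1 <= i <= n)%nat -> (0 < Rs i /\ Rs i < 2 ^ K)%nat)
  (hs : forall i, (1 <= i <= n)%nat -> (ss i < Rs i)%nat) :
  forall i, (i <= n)%nat ->
  Phi M K Rs ss i - Phi M K Rs ss 0 <=
  sumR (fun j => log2R (INR (Rs j))) i
  + / (ln 2 * 2 ^ M) * INR (length (snd (enc_states M K Rs ss i))).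
Proof.
  induction i; intros Hi.
  - simpl. lra.
  - pose proof (enc_bound M K Rs ss n hK hR hs i ltac:(lia)) as Hb.
    specialize (IHi ltac:(lia)). unfold Phi in *. simpl enc_states. simpl sumR.
    destruct (enc_states M K Rs ss i) as [c bs] eqn:E. simpl fst in *. simpl snd in *.
    pose proof (step_real M K (Rs (S i)) (ss (S i)) c bs hK (hR (S i) ltac:(lia))
       (hs (S i) ltac:(lia)) Hb).
    lra.
Qed.

Lemma final_alg (a k D S b l : R) : 0 < a -> 1 <= k -> 1 < a * k -> 0 <= b ->
  D <= S + / a * b -> k * b <= D -> l < D + 1 + / a ->
  l < 1 / (1 - 1 / (a * k)) * (S + 1 + / a).
Proof.
  intros Ha Hk Hak Hb H1 H2 H3.
  set (u := 1 / (a * k)).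
  assert (Hu : 0 < u < 1).
  { unfold u. split. apply Rdiv_lt_0_compat; lra.
    apply (Rmult_lt_reg_r (a * k)); [lra|]. unfold Rdiv. rewrite Rmult_assoc, Rinv_l by lra. lra. }
  assert (E : / a * b = u * (k * b)) by (unfold u; field; lra).
  assert (H4 : D * (1 - u) <= S) by nra.
  set (q := 1 - u) in *.
  assert (Hq : 0 < q <= 1) by (unfold q; lra).
  assert (Hia : 0 < / a) by (apply Rinv_0_lt_compat; lra).
  assert (Hiq : 1 / q * q = 1) by (field; lra).
  assert (Hiq1 : 1 <= 1 / q).
  { apply (Rmult_le_reg_r q); lra. }
  assert (H5 : 1 / q * (D * q) <= 1 / q * S) by (apply Rmult_le_compat_l; lra).
  replace (1 / q * (D * q)) with D in H5 by (field; lra).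
  assert (H6 : 1 * (1 + / a) <= 1 / q * (1 + / a)) by (apply Rmult_le_compat_r; lra).
  replace (1 / q * (S + 1 + / a)) with (1 / q * S + 1 / q * (1 + / a)) by ring.
  lra.
Qed.

Theorem theorem1 (M K n : nat) (Rs ss : nat -> nat)
  (hM : (0 < M)%nat) (hK : (0 < K)%nat)
  (hR : forall i, (1 <= i <= n)%nat -> (0 < Rs i /\ Rs i < 2 ^ K)%nat)
  (hs : forall i, (1 <= i <= n)%nat -> (ss i < Rs i)%nat) :
  (forall i, (i < n)%nat ->
     fst (dec_states M K Rs ss n (n - i)) = ss (S i) /\
     snd (dec_states M K Rs ss n (n - i)) = enc_states M K Rs ss i)
  /\
  ubcs_len K (enc_states M K Rs ss n) - ubcs_len K (enc_states M K Rs ss 0)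
  < 1 / (1 - 1 / (ln 2 * 2 ^ M * INR K)) *
    (fold_right Rplus 0 (map (fun i => log2R (INR (Rs i))) (seq 1 n))
     + 1 + / (ln 2 * 2 ^ M)).
Proof.
  split.
  - intros i Hi.
    destruct (dec_correct M K Rs ss n hK hR hs (n - i) ltac:(lia)) as [H1 H2].
    replace (n - (n - i))%nat with i in H1 by lia.
    split; [|exact H1]. rewrite H2 by lia. f_equal. lia.
  - rewrite fold_sum.
    pose proof (phi_sum M K Rs ss n hK hR hs n (le_n n)) as HD.
    pose proof (enc_bound M K Rs ss n hK hR hs n (le_n n)) as Hb.
    pose proof ln2_pos as HL.
    assert (HPr : 2 <= 2 ^ M).
    { rewrite <- INR_pow2. replace 2 with (INR (2 ^ 1)) at 1 by (simpl; lra).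
      apply le_INR. apply Nat.pow_le_mono_r; lia. }
    assert (HKr : 1 <= INR K) by (apply (le_INR 1); lia).
    unfold Phi in HD. unfold ubcs_len.
    destruct (enc_states M K Rs ss n) as [c bs] eqn:E. simpl fst in *; simpl snd in *.
    assert (Hcr : 2 ^ M <= INR c) by (rewrite <- INR_pow2; apply le_INR; lia).
    simpl enc_states in *. simpl fst in *; simpl snd in *. simpl length in *.
    rewrite INR_pow2 in *. rewrite Nat.mul_0_r. simpl (INR 0) in *.
    set (a := ln 2 * 2 ^ M).
    assert (Ha : 0 < a) by (unfold a; nra).
    assert (Ha1 : ln 2 * 2 <= a) by (unfold a; apply Rmult_le_compat_l; lra).
    assert (Hak : 1 < a * INR K).
    { pose proof ln_lt_2. assert (a * 1 <= a * INR K) by (apply Rmult_le_compat_l; lra). lra. }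
    pose proof (ceil_bounds (log2R (INR c))) as [_ Cn].
    pose proof (ceil_bounds (log2R (2 ^ M))) as [C0 _].
    assert (Hl0 : log2R (2 ^ M) = INR M) by (rewrite <- INR_pow2; apply log2R_pow).
    assert (Hmono : log2R (INR c) <= log2R (INR c + 1)) by (apply log2R_le; lra).
    assert (Hmono2 : log2R (2 ^ M + 1) <= log2R (INR c + 1)) by (apply log2R_le; lra).
    assert (Hphi0 : log2R (2 ^ M + 1) <= INR M + / a).
    { unfold log2R. pose proof (ln_growth (2 ^ M) (2 ^ M + 1) ltac:(lra) ltac:(lra)) as G.
      rewrite ln_pow in G by lra. replace (2 ^ M + 1 - 2 ^ M) with 1 in G by ring.
      unfold Rdiv at 1.
      assert (0 < / ln 2) by (apply Rinv_0_lt_compat; lra).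
      assert (G2 := Rmult_le_compat_r (/ ln 2) _ _ (Rlt_le _ _ H) G).
      replace ((INR M * ln 2 + 1 / 2 ^ M) * / ln 2) with (INR M + / a) in G2
        by (unfold a; field; lra).
      exact G2. }
    rewrite mult_INR.
    pose proof (pos_INR (length bs)).
    apply (final_alg a (INR K) (log2R (INR c + 1) + INR K * INR (length bs) - (log2R (2 ^ M + 1) + INR K * 0))
             _ (INR (length bs))); try lra. exact HD.
Qed.
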